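(* Let $E,F$ be vector lattices with $F$ Dedekind complete, and let $S,T\in\mathcal{U}_+(E,F)$. Then $S\wedge T=0$ in $\mathcal{U}(E,F)$ if and only if for every $x\in E$ and every $\varepsilon>0$ there exist a partition of unity $(\rho_\alpha)_{\alpha\in\Delta}$ in $\mathfrak{P}(F)$ and a family $(x_\alpha)_{\alpha\in\Delta}\subset\mathcal{F}_x$ such that \[ \rho_\alpha Tx_\alpha\le\varepsilon\,Tx\quad\text{and}\quad\rho_\alpha S(x-x_\alpha)\le\varepsilon\,Sx\quad\text{for all }\alpha\in\Delta. \]
   Context: For a vector lattice $E$, an element $z$ is a fragment of $x\in E$ if $|z|\wedge|x-z|=0$; $\mathcal{F}_x$ denotes the set of fragments of $x$. An operator $T\colon E\to F$ between vector lattices is orthogonally additive if $T(x+y)=Tx+Ty$ whenever $|x|\wedge|y|=0$. $\mathcal{U}(E,F)$ is the set of orthogonally additive, order bounded (in general nonlinear) operators $E\to F$, ordered by $S\le T$ iff $Tx-Sx\ge0$ for all $x\in E$; $\mathcal{U}_+(E,F)$ is its positive cone. For Dedekind complete $F$, $\mathcal{U}(E,F)$ is a Dedekind complete vector lattice. $\mathfrak{P}(F)$ is the Boolean algebra of band projections of $F$ ($\rho'\wedge\rho''=\rho'\rho''$, $\rho^\perp=I_F-\rho$). A partition of unity in $\mathfrak{P}(F)$ is a family $(\rho_\alpha)$ of band projections with $\rho_\alpha\wedge\rho_\beta=0$ for $\alpha\ne\beta$ and $\sup_\alpha\rho_\alpha=I_F$. *)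

(* Defs.v *)
From Stdlib Require Import Reals.
Open Scope R_scope.

Record VectorLattice := {
  vl_car :> Type;
  vzero : vl_car;
  vadd : vl_car -> vl_car -> vl_car;
  vopp : vl_car -> vl_car;
  vscal : R -> vl_car -> vl_car;
  vle : vl_car -> vl_car -> Prop;
  vjoin : vl_car -> vl_car -> vl_car;
  vmeet : vl_car -> vl_car -> vl_car;
  vaddA : forall x y z, vadd x (vadd y z) = vadd (vadd x y) z;
  vaddC : forall x y, vadd x y = vadd y x;
  vadd0 : forall x, vadd vzero x = x;
  vaddN : forall x, vadd x (vopp x) = vzero;
  vscal1 : forall x, vscal 1 x = x;
  vscalA : forall a b x, vscal a (vscal b x) = vscal (a * b) x;
  vscalDl : forall a b x, vscal (a + b) x = vadd (vscal a x) (vscal b x);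
  vscalDr : forall a x y, vscal a (vadd x y) = vadd (vscal a x) (vscal a y);
  vle_refl : forall x, vle x x;
  vle_antisym : forall x y, vle x y -> vle y x -> x = y;
  vle_trans : forall x y z, vle x y -> vle y z -> vle x z;
  vle_add : forall x y z, vle x y -> vle (vadd x z) (vadd y z);
  vle_scal : forall a x y, 0 <= a -> vle x y -> vle (vscal a x) (vscal a y);
  vjoin_l : forall x y, vle x (vjoin x y);
  vjoin_r : forall x y, vle y (vjoin x y);
  vjoin_least : forall x y z, vle x z -> vle y z -> vle (vjoin x y) z;
  vmeet_l : forall x y, vle (vmeet x y) x;
  vmeet_r : forall x y, vle (vmeet x y) y;
  vmeet_greatest : forall x y z, vle z x -> vle z y -> vle z (vmeet x y)
}.

Arguments vzero {v}.
Arguments vadd {v} _ _.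
Arguments vopp {v} _.
Arguments vscal {v} _ _.
Arguments vle {v} _ _.
Arguments vjoin {v} _ _.
Arguments vmeet {v} _ _.

Definition vsub {E : VectorLattice} (x y : E) : E := vadd x (vopp y).
Definition vabs {E : VectorLattice} (x : E) : E := vjoin x (vopp x).

Definition disjoint {E : VectorLattice} (x y : E) : Prop :=
  vmeet (vabs x) (vabs y) = vzero.

Definition is_sup {E : VectorLattice} (A : E -> Prop) (s : E) : Prop :=
  (forall x, A x -> vle x s) /\ (forall u, (forall x, A x -> vle x u) -> vle s u).

Definition dedekind_complete (F : VectorLattice) : Prop :=
  forall A : F -> Prop, (exists x, A x) -> (exists u, forall x, A x -> vle x u) ->
    exists s, is_sup A s.

Definition fragment {E : VectorLattice} (z x : E) : Prop := disjoint z (vsub x z).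

Definition is_band {F : VectorLattice} (B : F -> Prop) : Prop :=
  B vzero /\
  (forall x y, B x -> B y -> B (vadd x y)) /\
  (forall a x, B x -> B (vscal a x)) /\
  (forall x y, B x -> vle (vabs y) (vabs x) -> B y) /\
  (forall (A : F -> Prop) s, (forall x, A x -> B x) -> is_sup A s -> B s).

Definition disj_compl {F : VectorLattice} (B : F -> Prop) (y : F) : Prop :=
  forall b, B b -> disjoint y b.

Definition band_projection {F : VectorLattice} (rho : F -> F) : Prop :=
  exists B : F -> Prop, is_band B /\
    forall x, B (rho x) /\ disj_compl B (vsub x (rho x)).

(** Order of the Boolean algebra P(F): rho <= pi iff rho /\ pi = pi rho = rho. *)
Definition bp_le {F : VectorLattice} (rho pi : F -> F) : Prop :=
  forall x, pi (rho x) = rho x.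

(** Partition of unity in P(F): pairwise disjoint band projections
    (rho_a /\ rho_b = rho_a rho_b = 0 for a <> b) with supremum I_F in P(F). *)
Definition partition_of_unity {F : VectorLattice} {D : Type} (rho : D -> F -> F) : Prop :=
  (forall a, band_projection (rho a)) /\
  (forall a b, a <> b -> forall x, rho a (rho b x) = vzero) /\
  (forall pi : F -> F, band_projection pi -> (forall a, bp_le (rho a) pi) ->
     forall x, pi x = x).

Definition orth_additive {E F : VectorLattice} (T : E -> F) : Prop :=
  forall x y : E, disjoint x y -> T (vadd x y) = vadd (T x) (T y).

Definition order_bounded_op {E F : VectorLattice} (T : E -> F) : Prop :=
  forall a b : E, exists c d : F,
    forall x, vle a x -> vle x b -> vle c (T x) /\ vle (T x) d.

Definition in_U {E F : VectorLattice} (T : E -> F) : Prop :=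
  orth_additive T /\ order_bounded_op T.

Definition U_le {E F : VectorLattice} (S T : E -> F) : Prop :=
  forall x, vle vzero (vsub (T x) (S x)).

Definition U_zero {E F : VectorLattice} : E -> F := fun _ => vzero.

Definition in_U_plus {E F : VectorLattice} (T : E -> F) : Prop :=
  in_U T /\ U_le U_zero T.

Definition U_inf_is {E F : VectorLattice} (S T M : E -> F) : Prop :=
  in_U M /\ U_le M S /\ U_le M T /\
  (forall R, in_U R -> U_le R S -> U_le R T -> U_le R M).

(* Main.v *)
Require Import Defs.
From Stdlib Require Import Reals Lra Classical ClassicalEpsilon ProofIrrelevance.
Open Scope R_scope.

From mathcomp Require ssreflect ssrbool boolp classical_sets.
Module ZW.
Import ssreflect ssrbool boolp classical_sets.
Local Open Scope classical_set_scope.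
Lemma my_zorn (T : Type) (P : (T -> Prop) -> Prop) :
  (forall Fm : (T->Prop) -> Prop, (forall X, Fm X -> P X) ->
     (forall X Y, Fm X -> Fm Y -> (forall t, X t -> Y t) \/ (forall t, Y t -> X t)) ->
     P (fun t => exists X, Fm X /\ X t)) ->
  exists A, P A /\ forall B, (forall t, A t -> B t) -> P B -> forall t, B t -> A t.
Proof.
move=> H.
have [|A [PA Amax]] := @Zorn_bigcup T P.
  move=> Fm FP Ftot.
  have -> : (\bigcup_(X in Fm) X) = (fun t => exists X, Fm X /\ X t).
    apply: funext => t; apply: propext; split.
      by case=> X FX Xt; exists X.
    by case=> X [FX Xt]; exists X.
  apply: H; first exact: FP.
  move=> X Y FX FY; case: (Ftot X Y FX FY) => h; [left|right] => t; exact: h.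
exists A; split => // B AB PB t Bt.
apply: NNPP => nAt.
apply: (Amax B) => //; split; first exact: AB.
move=> BA; apply: nAt; exact: BA.
Qed.
End ZW.

Section Basic.
Context {V : VectorLattice}.
Implicit Types x y z w u v : V.

Lemma addA x y z : vadd x (vadd y z) = vadd (vadd x y) z. Proof. apply vaddA. Qed.
Lemma addC x y : vadd x y = vadd y x. Proof. apply vaddC. Qed.
Lemma add0l x : vadd vzero x = x. Proof. apply vadd0. Qed.
Lemma add0r x : vadd x vzero = x. Proof. rewrite addC; apply vadd0. Qed.
Lemma addNr x : vadd x (vopp x) = vzero. Proof. apply vaddN. Qed.
Lemma addNl x : vadd (vopp x) x = vzero. Proof. rewrite addC; apply vaddN. Qed.

Lemma add_cancel_r x y z : vadd x z = vadd y z -> x = y.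
Proof.
  intro H. rewrite <- (add0r x), <- (add0r y), <- (addNr z), !addA, H. reflexivity.
Qed.
Lemma add_cancel_l x y z : vadd z x = vadd z y -> x = y.
Proof. rewrite (addC z x), (addC z y). apply add_cancel_r. Qed.

Lemma addKr x y : vadd (vadd x y) (vopp y) = x.
Proof. rewrite <- addA, addNr, add0r. reflexivity. Qed.
Lemma addNKr x y : vadd (vadd x (vopp y)) y = x.
Proof. rewrite <- addA, addNl, add0r. reflexivity. Qed.

Lemma opp_uniq x y : vadd x y = vzero -> y = vopp x.
Proof. intro H. apply (add_cancel_l _ _ x). rewrite H, addNr. reflexivity. Qed.
Lemma oppK x : vopp (vopp x) = x.
Proof. symmetry. apply opp_uniq. apply addNl. Qed.
Lemma opp0 : vopp (@vzero V) = vzero.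
Proof. symmetry. apply opp_uniq. apply add0l. Qed.
Lemma oppD x y : vopp (vadd x y) = vadd (vopp x) (vopp y).
Proof.
  symmetry. apply opp_uniq.
  rewrite (addC (vopp x)), addA, <- (addA x y), addNr, add0r, addNr. reflexivity.
Qed.
Lemma opp_inj x y : vopp x = vopp y -> x = y.
Proof. intro H. rewrite <- (oppK x), H, oppK. reflexivity. Qed.

Lemma subrr x : vsub x x = vzero. Proof. apply addNr. Qed.
Lemma subr0 x : vsub x vzero = x. Proof. unfold vsub. rewrite opp0, add0r. reflexivity. Qed.
Lemma sub0r x : vsub vzero x = vopp x. Proof. unfold vsub. apply add0l. Qed.
Lemma subK x y : vadd y (vsub x y) = x.
Proof. unfold vsub. rewrite addC. apply addNKr. Qed.
Lemma sub_eq0 x y : vsub x y = vzero -> x = y.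
Proof. unfold vsub. intro H. rewrite <- (addNKr x y), H, add0l. reflexivity. Qed.
Lemma oppB x y : vopp (vsub x y) = vsub y x.
Proof. unfold vsub. rewrite oppD, oppK, addC. reflexivity. Qed.

Lemma scal0 x : vscal 0 x = vzero.
Proof.
  apply (add_cancel_l _ _ (vscal 0 x)). rewrite <- vscalDl, add0r.
  replace (0+0) with 0 by ring. reflexivity.
Qed.
Lemma scalr0 a : vscal a (@vzero V) = vzero.
Proof. rewrite <- (scal0 vzero), vscalA, Rmult_0_r. reflexivity. Qed.
Lemma scalN1 x : vscal (-1) x = vopp x.
Proof.
  apply opp_uniq. rewrite <- (vscal1 _ x) at 1. rewrite <- vscalDl.
  replace (1 + -1) with 0 by ring. apply scal0.
Qed.
Lemma scalNl a x : vscal (- a) x = vopp (vscal a x).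
Proof. rewrite <- scalN1, vscalA. f_equal. ring. Qed.
Lemma scalNr a x : vscal a (vopp x) = vopp (vscal a x).
Proof. rewrite <- scalN1, vscalA, <- scalN1, vscalA. f_equal. ring. Qed.
Lemma scalB a x y : vscal a (vsub x y) = vsub (vscal a x) (vscal a y).
Proof. unfold vsub. rewrite vscalDr, scalNr. reflexivity. Qed.
Lemma scal2 x : vscal 2 x = vadd x x.
Proof. replace 2 with (1+1) by ring. rewrite vscalDl, vscal1. reflexivity. Qed.

Lemma le_refl x : vle x x. Proof. apply vle_refl. Qed.
Lemma le_trans x y z : vle x y -> vle y z -> vle x z. Proof. apply vle_trans. Qed.
Lemma le_antisym x y : vle x y -> vle y x -> x = y. Proof. apply vle_antisym. Qed.
Lemma le_add2r x y z : vle x y -> vle (vadd x z) (vadd y z). Proof. apply vle_add. Qed.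
Lemma le_add2l x y z : vle x y -> vle (vadd z x) (vadd z y).
Proof. rewrite !(addC z). apply vle_add. Qed.
Lemma le_add2r_inv x y z : vle (vadd x z) (vadd y z) -> vle x y.
Proof. intro H. rewrite <- (addKr x z), <- (addKr y z). apply le_add2r, H. Qed.
Lemma le_add2l_inv x y z : vle (vadd z x) (vadd z y) -> vle x y.
Proof. rewrite !(addC z). apply le_add2r_inv. Qed.
Lemma le_add x y z w : vle x y -> vle z w -> vle (vadd x z) (vadd y w).
Proof. intros. apply le_trans with (vadd y z). apply le_add2r; auto. apply le_add2l; auto. Qed.
Lemma le_opp x y : vle x y -> vle (vopp y) (vopp x).
Proof.
  intro H. pose proof (le_add2r _ _ (vadd (vopp x) (vopp y)) H) as H'.
  rewrite addA, addNr, add0l in H'.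
  rewrite (addC (vopp x)), addA, addNr, add0l in H'. exact H'.
Qed.
Lemma le_opp_inv x y : vle (vopp y) (vopp x) -> vle x y.
Proof. intro H. rewrite <- (oppK x), <- (oppK y). apply le_opp, H. Qed.
Lemma subr_ge0 x y : vle vzero (vsub y x) -> vle x y.
Proof.
  intro H. apply (le_add2r _ _ x) in H. rewrite add0l in H. unfold vsub in H.
  rewrite addNKr in H. exact H.
Qed.
Lemma subr_ge0' x y : vle x y -> vle vzero (vsub y x).
Proof. intro H. rewrite <- (subrr x). apply le_add2r, H. Qed.
Lemma subr_le0 x y : vle (vsub x y) vzero -> vle x y.
Proof.
  intro H. apply (le_add2r _ _ y) in H. rewrite add0l in H. unfold vsub in H.
  rewrite addNKr in H. exact H.
Qed.
Lemma subr_le0' x y : vle x y -> vle (vsub x y) vzero.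
Proof. intro H. rewrite <- (subrr y). apply le_add2r, H. Qed.
Lemma le_scal a x y : 0 <= a -> vle x y -> vle (vscal a x) (vscal a y).
Proof. apply vle_scal. Qed.
Lemma le_scal_inv a x y : 0 < a -> vle (vscal a x) (vscal a y) -> vle x y.
Proof.
  intros Ha H. apply (le_scal (/a)) in H; [|left; apply Rinv_0_lt_compat; exact Ha].
  rewrite !vscalA, Rinv_l, !vscal1 in H by lra. exact H.
Qed.
Lemma scal_ge0 a x : 0 <= a -> vle vzero x -> vle vzero (vscal a x).
Proof. intros Ha H. rewrite <- (scalr0 a). apply le_scal; auto. Qed.
Lemma le_opp0 x : vle vzero x -> vle (vopp x) vzero.
Proof. intro H. rewrite <- opp0. apply le_opp, H. Qed.
Lemma le_scal_l a b x : a <= b -> vle vzero x -> vle (vscal a x) (vscal b x).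
Proof.
  intros Hab Hx. apply subr_ge0. unfold vsub. rewrite <- scalNl, <- vscalDl.
  apply scal_ge0; auto. lra.
Qed.

Lemma join_l x y : vle x (vjoin x y). Proof. apply vjoin_l. Qed.
Lemma join_r x y : vle y (vjoin x y). Proof. apply vjoin_r. Qed.
Lemma join_least x y z : vle x z -> vle y z -> vle (vjoin x y) z. Proof. apply vjoin_least. Qed.
Lemma meet_l x y : vle (vmeet x y) x. Proof. apply vmeet_l. Qed.
Lemma meet_r x y : vle (vmeet x y) y. Proof. apply vmeet_r. Qed.
Lemma meet_greatest x y z : vle z x -> vle z y -> vle z (vmeet x y). Proof. apply vmeet_greatest. Qed.

Lemma joinC x y : vjoin x y = vjoin y x.
Proof. apply le_antisym; apply join_least; (apply join_l || apply join_r). Qed.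
Lemma meetC x y : vmeet x y = vmeet y x.
Proof. apply le_antisym; apply meet_greatest; (apply meet_l || apply meet_r). Qed.
Lemma join_idl x y : vle x y -> vjoin x y = y.
Proof. intro H. apply le_antisym. apply join_least; auto using le_refl. apply join_r. Qed.
Lemma meet_idl x y : vle x y -> vmeet x y = x.
Proof. intro H. apply le_antisym. apply meet_l. apply meet_greatest; auto using le_refl. Qed.
Lemma join_mono x y x' y' : vle x x' -> vle y y' -> vle (vjoin x y) (vjoin x' y').
Proof.
  intros. apply join_least. apply le_trans with x'; auto; apply join_l.
  apply le_trans with y'; auto; apply join_r.
Qed.
Lemma meet_mono x y x' y' : vle x x' -> vle y y' -> vle (vmeet x y) (vmeet x' y').
Proof.
  intros. apply meet_greatest. apply le_trans with x; auto; apply meet_l.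
  apply le_trans with y; auto; apply meet_r.
Qed.
Lemma joinA x y z : vjoin x (vjoin y z) = vjoin (vjoin x y) z.
Proof.
  apply le_antisym.
  - apply join_least. apply le_trans with (vjoin x y); apply join_l.
    apply join_mono; [apply join_r | apply le_refl].
  - apply join_least. apply join_mono; [apply le_refl | apply join_l].
    apply le_trans with (vjoin y z); apply join_r.
Qed.

Lemma join_addr x y z : vadd (vjoin x y) z = vjoin (vadd x z) (vadd y z).
Proof.
  apply le_antisym.
  - apply (le_add2r_inv _ _ (vopp z)). rewrite addKr.
    apply join_least.
    + apply le_trans with (vadd (vadd x z) (vopp z)); [rewrite addKr; apply le_refl | apply le_add2r, join_l].
    + apply le_trans with (vadd (vadd y z) (vopp z)); [rewrite addKr; apply le_refl | apply le_add2r, join_r].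
  - apply join_least; apply le_add2r; (apply join_l || apply join_r).
Qed.
Lemma meet_addr x y z : vadd (vmeet x y) z = vmeet (vadd x z) (vadd y z).
Proof.
  apply le_antisym.
  - apply meet_greatest; apply le_add2r; (apply meet_l || apply meet_r).
  - apply (le_add2r_inv _ _ (vopp z)). rewrite addKr.
    apply meet_greatest.
    + apply le_trans with (vadd (vadd x z) (vopp z)); [apply le_add2r, meet_l | rewrite addKr; apply le_refl].
    + apply le_trans with (vadd (vadd y z) (vopp z)); [apply le_add2r, meet_r | rewrite addKr; apply le_refl].
Qed.
Lemma join_addl x y z : vadd z (vjoin x y) = vjoin (vadd z x) (vadd z y).
Proof. rewrite addC, join_addr, !(addC z). reflexivity. Qed.
Lemma meet_addl x y z : vadd z (vmeet x y) = vmeet (vadd z x) (vadd z y).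
Proof. rewrite addC, meet_addr, !(addC z). reflexivity. Qed.

Lemma opp_join x y : vopp (vjoin x y) = vmeet (vopp x) (vopp y).
Proof.
  apply le_antisym.
  - apply meet_greatest; apply le_opp; (apply join_l || apply join_r).
  - apply le_opp_inv. rewrite oppK. apply join_least.
    + rewrite <- (oppK x) at 1. apply le_opp, meet_l.
    + rewrite <- (oppK y) at 1. apply le_opp, meet_r.
Qed.
Lemma opp_meet x y : vopp (vmeet x y) = vjoin (vopp x) (vopp y).
Proof.
  rewrite <- (oppK x), <- (oppK y) at 1. rewrite <- opp_join, oppK. reflexivity.
Qed.

Lemma join_meet_add x y : vadd (vjoin x y) (vmeet x y) = vadd x y.
Proof.
  apply (add_cancel_l _ _ (vopp (vjoin x y))).
  rewrite addA, addNl, add0l.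
  rewrite opp_join, meet_addr.
  rewrite addA, addNl, add0l. rewrite (addC x y), addA, addNl, add0l. apply meetC.
Qed.


Definition pos x := vjoin x vzero.
Definition neg x := vjoin (vopp x) vzero.

Lemma pos_ge0 x : vle vzero (pos x). Proof. apply join_r. Qed.
Lemma neg_ge0 x : vle vzero (neg x). Proof. apply join_r. Qed.
Lemma le_pos x : vle x (pos x). Proof. apply join_l. Qed.
Lemma le_neg x : vle (vopp x) (neg x). Proof. apply join_l. Qed.
Lemma opp_neg x : vopp (neg x) = vmeet x vzero.
Proof. unfold neg. rewrite opp_join, oppK, opp0. reflexivity. Qed.
Lemma pos_sub_neg x : vsub (pos x) (neg x) = x.
Proof. unfold vsub. rewrite opp_neg. unfold pos. rewrite join_meet_add. apply add0r. Qed.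
Lemma pos_neg_meet x : vmeet (pos x) (neg x) = vzero.
Proof.
  apply (add_cancel_r _ _ (vopp (neg x))).
  rewrite meet_addr, addNr. fold (vsub (pos x) (neg x)). rewrite pos_sub_neg.
  rewrite add0l, opp_neg. reflexivity.
Qed.
Lemma pos_mono x y : vle x y -> vle (pos x) (pos y).
Proof. intro. apply join_mono; auto using le_refl. Qed.
Lemma neg_anti x y : vle x y -> vle (neg y) (neg x).
Proof. intro. apply join_mono; auto using le_refl, le_opp. Qed.
Lemma pos_id x : vle vzero x -> pos x = x.
Proof. intro H. unfold pos. rewrite joinC. apply join_idl, H. Qed.
Lemma pos_le x y : vle x y -> vle vzero y -> vle (pos x) y.
Proof. intros. apply join_least; auto. Qed.
Lemma pos_add x y : vle (pos (vadd x y)) (vadd (pos x) (pos y)).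
Proof.
  apply join_least. apply le_add; apply le_pos.
  rewrite <- (add0l vzero). apply le_add; apply pos_ge0.
Qed.
Lemma pos_le0 x : vle x vzero -> pos x = vzero.
Proof. intro H. unfold pos. apply join_idl, H. Qed.

Lemma le_abs x : vle x (vabs x). Proof. apply join_l. Qed.
Lemma le_abs_opp x : vle (vopp x) (vabs x). Proof. apply join_r. Qed.
Lemma abs_le x w : vle x w -> vle (vopp x) w -> vle (vabs x) w.
Proof. apply join_least. Qed.
Lemma abs_ge0 x : vle vzero (vabs x).
Proof.
  apply (le_scal_inv 2); [lra|]. rewrite scalr0, scal2.
  rewrite <- (addNr x). apply le_add; [apply le_abs | apply le_abs_opp].
Qed.
Lemma abs_id x : vle vzero x -> vabs x = x.
Proof.
  intro H. unfold vabs. rewrite joinC. apply join_idl.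
  apply le_trans with vzero; auto. apply le_opp0, H.
Qed.
Lemma abs_abs x : vabs (vabs x) = vabs x. Proof. apply abs_id, abs_ge0. Qed.
Lemma abs_opp x : vabs (vopp x) = vabs x.
Proof. unfold vabs. rewrite oppK. apply joinC. Qed.
Lemma abs0 : vabs (@vzero V) = vzero. Proof. apply abs_id, le_refl. Qed.
Lemma abs_add x y : vle (vabs (vadd x y)) (vadd (vabs x) (vabs y)).
Proof.
  apply abs_le. apply le_add; apply le_abs.
  rewrite oppD. apply le_add; apply le_abs_opp.
Qed.
Lemma abs_sub x y : vle (vabs (vsub x y)) (vadd (vabs x) (vabs y)).
Proof. unfold vsub. rewrite <- (abs_opp y). apply abs_add. Qed.
Lemma abs_le0 x : vle (vabs x) vzero -> x = vzero.
Proof.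
  intro H. apply le_antisym. apply le_trans with (vabs x); auto using le_abs.
  apply le_opp_inv. rewrite opp0. apply le_trans with (vabs x); auto using le_abs_opp.
Qed.
Lemma abs_eq0 x : vabs x = vzero -> x = vzero.
Proof. intro H. apply abs_le0. rewrite H. apply le_refl. Qed.
Lemma le_addr x y : vle vzero y -> vle x (vadd x y).
Proof. intro H. pattern x at 1. rewrite <- (add0r x). apply le_add2l, H. Qed.
Lemma le_addl x y : vle vzero y -> vle x (vadd y x).
Proof. intro H. rewrite addC. apply le_addr, H. Qed.
Lemma abs_pos_neg x : vle (vabs x) (vadd (pos x) (neg x)).
Proof.
  apply abs_le.
  - apply le_trans with (pos x). apply le_pos. apply le_addr, neg_ge0.
  - apply le_trans with (neg x). apply le_neg. apply le_addl, pos_ge0.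
Qed.
Lemma abs_scal a x : vle (vabs (vscal a x)) (vscal (Rabs a) (vabs x)).
Proof.
  destruct (Rle_or_lt 0 a) as [Ha|Ha].
  - rewrite Rabs_right by lra. apply abs_le.
    apply le_scal; auto using le_abs. rewrite <- scalNr. apply le_scal; auto using le_abs_opp.
  - rewrite Rabs_left by lra. apply abs_le.
    rewrite <- (oppK x) at 1. rewrite scalNr, <- scalNl. apply le_scal. lra. apply le_abs_opp.
    rewrite <- scalNl. apply le_scal. lra. apply le_abs.
Qed.
Lemma meet_ge0 x y : vle vzero x -> vle vzero y -> vle vzero (vmeet x y).
Proof. intros. apply meet_greatest; auto. Qed.

Lemma meet_add_le u v w : vle vzero u -> vle vzero v -> vle vzero w ->
  vle (vmeet u (vadd v w)) (vadd (vmeet u v) (vmeet u w)).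
Proof.
  intros Hu Hv Hw. set (t := vmeet u (vadd v w)).
  assert (H : vle (vsub t (vmeet u v)) (vmeet u w)).
  { unfold vsub. rewrite opp_meet, join_addl. apply join_least.
    - apply le_trans with vzero. apply subr_le0', meet_l. apply meet_ge0; auto.
    - apply meet_greatest.
      + apply le_trans with t. rewrite <- (add0r t) at 2. apply le_add2l.
        apply le_opp0; auto. apply meet_l.
      + apply (le_add2r_inv _ _ v). rewrite addNKr, addC. apply meet_r. }
  apply (le_add2r _ _ (vmeet u v)) in H. unfold vsub in H. rewrite addNKr in H.
  rewrite addC. exact H.
Qed.

Lemma disj_sym x y : disjoint x y -> disjoint y x.
Proof. unfold disjoint. rewrite meetC. auto. Qed.
Lemma disj_ge0_iff u v : vle vzero u -> vle vzero v -> (disjoint u v <-> vmeet u v = vzero).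
Proof. intros. unfold disjoint. rewrite !abs_id by auto. tauto. Qed.
Lemma disj_dom x y z : vle (vabs x) (vabs y) -> disjoint y z -> disjoint x z.
Proof.
  unfold disjoint. intros H1 H2. apply le_antisym.
  rewrite <- H2. apply meet_mono; auto using le_refl.
  apply meet_ge0; apply abs_ge0.
Qed.
Lemma disj_abs x z : disjoint x z -> disjoint (vabs x) z.
Proof. intro. eapply disj_dom; eauto. rewrite abs_abs. apply le_refl. Qed.
Lemma disj_opp x z : disjoint x z -> disjoint (vopp x) z.
Proof. intro. eapply disj_dom; eauto. rewrite abs_opp. apply le_refl. Qed.
Lemma disj_add x y z : disjoint x z -> disjoint y z -> disjoint (vadd x y) z.
Proof.
  unfold disjoint. intros H1 H2. apply le_antisym; [|apply meet_ge0; apply abs_ge0].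
  apply le_trans with (vmeet (vadd (vabs x) (vabs y)) (vabs z)).
  apply meet_mono; auto using abs_add, le_refl.
  rewrite meetC. apply le_trans with (vadd (vmeet (vabs z) (vabs x)) (vmeet (vabs z) (vabs y))).
  apply meet_add_le; apply abs_ge0.
  rewrite (meetC (vabs z)), (meetC (vabs z)), H1, H2, add0l. apply le_refl.
Qed.
Lemma disj_sub x y z : disjoint x z -> disjoint y z -> disjoint (vsub x y) z.
Proof. intros. apply disj_add; auto. apply disj_opp; auto. Qed.
Lemma disj_0 z : disjoint vzero z.
Proof.
  unfold disjoint. rewrite abs0. apply le_antisym. apply meet_l. apply meet_ge0; auto using le_refl, abs_ge0.
Qed.
Lemma disj_self x : disjoint x x -> x = vzero.
Proof. unfold disjoint. intro H. rewrite meet_idl in H by apply le_refl. apply abs_eq0, H. Qed.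
Lemma disj_nat n x z : disjoint x z -> disjoint (vscal (INR n) (vabs x)) z.
Proof.
  intro H. induction n.
  - simpl. rewrite scal0. apply disj_0.
  - rewrite S_INR, vscalDl, vscal1. apply disj_add; auto. apply disj_abs; auto.
Qed.
Lemma disj_scal a x z : disjoint x z -> disjoint (vscal a x) z.
Proof.
  intro H. destruct (INR_unbounded (Rabs a)) as [n Hn].
  apply (disj_dom _ (vscal (INR n) (vabs x))); [|apply disj_nat; auto].
  apply le_trans with (vscal (Rabs a) (vabs x)). apply abs_scal.
  rewrite (abs_id (vscal (INR n) _)). apply le_scal_l. lra. apply abs_ge0.
  apply scal_ge0. apply pos_INR. apply abs_ge0.
Qed.

Lemma abs_le_add_disj (a b : V) : disjoint a b -> vle (vabs a) (vabs (vadd a b)).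
Proof.
  intro H. unfold disjoint in H.
  assert (H1 : vle (vabs a) (vadd (vabs (vadd a b)) (vabs b))).
  { assert (E: a = vsub (vadd a b) b) by (unfold vsub; rewrite addKr; reflexivity).
    pose proof (abs_sub (vadd a b) b) as H0. rewrite <- E in H0. exact H0. }
  rewrite <- (meet_idl _ _ H1).
  eapply le_trans. apply meet_add_le; auto using abs_ge0.
  rewrite H, add0r. apply meet_r.
Qed.

Lemma split_disj y U1 U2 : vle vzero y -> vle vzero U1 -> vle vzero U2 ->
  vmeet U1 U2 = vzero -> vle y (vadd U1 U2) ->
  y = vadd (vmeet y U1) (vmeet y U2).
Proof.
  intros Hy H1 H2 H12 Hle. apply le_antisym.
  - rewrite <- (meet_idl _ _ Hle) at 1. apply meet_add_le; auto.
  - rewrite <- join_meet_add. apply le_trans with (vadd y vzero); [|rewrite add0r; apply le_refl].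
    apply le_add. apply join_least; apply meet_l.
    rewrite <- H12. apply meet_mono; apply meet_r.
Qed.

End Basic.

Section Frag.
Context {V : VectorLattice}.
Implicit Types x y z w u v a b c d : V.

Lemma add4 a b c d : vadd (vadd a b) (vadd c d) = vadd (vadd a c) (vadd b d).
Proof. rewrite <- !addA. f_equal. rewrite !addA. f_equal. apply addC. Qed.
Lemma sub_add2 a b c d : vsub (vadd a b) (vadd c d) = vadd (vsub a c) (vsub b d).
Proof. unfold vsub. rewrite oppD. apply add4. Qed.

Lemma disj_dom_both a b c d : vle (vabs a) (vabs b) -> vle (vabs c) (vabs d) ->
  disjoint b d -> disjoint a c.
Proof.
  intros H1 H2 H. apply disj_sym. apply (disj_dom c d a H2). apply disj_sym.
  apply (disj_dom a b d H1 H).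
Qed.
Lemma disj_dom2 x y1 y2 z : vle (vabs x) (vadd (vabs y1) (vabs y2)) ->
  disjoint y1 z -> disjoint y2 z -> disjoint x z.
Proof.
  intros H H1 H2. apply (disj_dom x (vadd (vabs y1) (vabs y2))).
  rewrite (abs_id (vadd _ _)). exact H. rewrite <- (add0l vzero). apply le_add; apply abs_ge0.
  apply disj_add; apply disj_abs; auto.
Qed.

Lemma frag_0 z : fragment vzero z. Proof. apply disj_0. Qed.
Lemma frag_self z : fragment z z.
Proof. unfold fragment. rewrite subrr. apply disj_sym, disj_0. Qed.
Lemma frag_abs y z : fragment y z -> vle (vabs y) (vabs z).
Proof.
  intro H. pose proof (abs_le_add_disj _ _ H) as H1. rewrite subK in H1. exact H1.
Qed.
Lemma frag_abs' y z : fragment y z -> vle (vabs (vsub z y)) (vabs z).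
Proof.
  intro H. pose proof (abs_le_add_disj _ _ (disj_sym _ _ H)) as H1.
  rewrite addC, subK in H1. exact H1.
Qed.

Lemma frag_sum z1 z2 y1 y2 : disjoint z1 z2 -> fragment y1 z1 -> fragment y2 z2 ->
  fragment (vadd y1 y2) (vadd z1 z2) /\ disjoint y1 y2 /\
  disjoint (vsub z1 y1) (vsub z2 y2).
Proof.
  intros H F1 F2.
  pose proof (frag_abs _ _ F1) as A1. pose proof (frag_abs' _ _ F1) as A1'.
  pose proof (frag_abs _ _ F2) as A2. pose proof (frag_abs' _ _ F2) as A2'.
  assert (D12 : disjoint y1 y2) by (eapply disj_dom_both; eauto).
  assert (Dc : disjoint (vsub z1 y1) (vsub z2 y2)) by (eapply disj_dom_both; eauto).
  assert (D1c : disjoint y1 (vsub z2 y2)) by (eapply disj_dom_both; eauto).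
  assert (D2c : disjoint (vsub z1 y1) y2) by (eapply disj_dom_both; eauto).
  split; [|split; auto].
  unfold fragment. rewrite sub_add2. apply disj_add.
  - apply disj_sym, disj_add; apply disj_sym; auto.
  - apply disj_sym, disj_add; apply disj_sym; auto. apply disj_sym; auto.
Qed.

Lemma frag_split z1 z2 y : disjoint z1 z2 -> fragment y (vadd z1 z2) ->
  exists y1 y2, fragment y1 z1 /\ fragment y2 z2 /\ y = vadd y1 y2.
Proof.
  intros H F.
  assert (HU : vmeet (vabs z1) (vabs z2) = vzero) by exact H.
  assert (Hy : vle (vabs y) (vadd (vabs z1) (vabs z2))).
  { apply le_trans with (vabs (vadd z1 z2)). apply frag_abs, F. apply abs_add. }
  set (p := pos y). set (n := neg y).
  assert (Hp : vle p (vadd (vabs z1) (vabs z2))).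
  { apply le_trans with (vabs y); auto. apply pos_le. apply le_abs. apply abs_ge0. }
  assert (Hn : vle n (vadd (vabs z1) (vabs z2))).
  { apply le_trans with (vabs y); auto. apply join_least. apply le_abs_opp. apply abs_ge0. }
  assert (G1 : vle vzero (vabs z1)) by apply abs_ge0. assert (G2 : vle vzero (vabs z2)) by apply abs_ge0.
  pose proof (split_disj p _ _ (pos_ge0 _) G1 G2 HU Hp) as Ep.
  pose proof (split_disj n _ _ (neg_ge0 _) G1 G2 HU Hn) as En.
  set (y1 := vsub (vmeet p (vabs z1)) (vmeet n (vabs z1))).
  set (y2 := vsub (vmeet p (vabs z2)) (vmeet n (vabs z2))).
  assert (Ey : y = vadd y1 y2).
  { unfold y1, y2. rewrite <- sub_add2, <- Ep, <- En. unfold p, n. symmetry. apply pos_sub_neg. }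
  assert (B1 : vle (vabs y1) (vadd (vabs z1) (vabs z1))).
  { eapply le_trans. apply abs_sub.
    rewrite (abs_id (vmeet p _)) by (apply meet_ge0; auto; apply pos_ge0).
    rewrite (abs_id (vmeet n _)) by (apply meet_ge0; auto; apply neg_ge0).
    apply le_add; apply meet_r. }
  assert (B2 : vle (vabs y2) (vadd (vabs z2) (vabs z2))).
  { eapply le_trans. apply abs_sub.
    rewrite (abs_id (vmeet p _)) by (apply meet_ge0; auto; apply pos_ge0).
    rewrite (abs_id (vmeet n _)) by (apply meet_ge0; auto; apply neg_ge0).
    apply le_add; apply meet_r. }
  assert (D1 : disjoint y1 z2) by (eapply disj_dom2; eauto).
  assert (D2 : disjoint y2 z1) by (eapply disj_dom2; eauto; apply disj_sym; auto).
  assert (D12 : disjoint y1 y2).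
  { apply disj_sym. eapply disj_dom2; eauto; apply disj_sym; auto. }
  set (c1 := vsub z1 y1). set (c2 := vsub z2 y2).
  assert (C1z : disjoint c1 z2) by (eapply disj_dom2; [apply abs_sub | auto | auto]).
  assert (C1y : disjoint c1 y2) by (eapply disj_dom2; [apply abs_sub | apply disj_sym; auto | auto]).
  assert (C12 : disjoint c1 c2).
  { apply disj_sym. eapply disj_dom2; [apply abs_sub | apply disj_sym; auto | apply disj_sym; auto]. }
  assert (Ez : vsub (vadd z1 z2) y = vadd c1 c2) by (rewrite Ey; apply sub_add2).
  assert (Dy : disjoint y (vsub (vadd z1 z2) y)) by exact F.
  rewrite Ez in Dy.
  exists y1, y2. split; [|split; auto].
  - unfold fragment. fold c1.
    apply (disj_dom_both _ y _ (vadd c1 c2)); auto.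
    rewrite Ey. apply abs_le_add_disj; auto. apply abs_le_add_disj; auto.
  - unfold fragment. fold c2.
    apply (disj_dom_both _ y _ (vadd c1 c2)); auto.
    rewrite Ey, addC. apply abs_le_add_disj; apply disj_sym; auto.
    rewrite addC. apply abs_le_add_disj; apply disj_sym; auto.
Qed.

End Frag.

Section Bands.
Context {V : VectorLattice}.
Implicit Types x y z w u v a b c d f k : V.
Implicit Types B : V -> Prop.

Definition dcomp (Z : V -> Prop) : V -> Prop := fun k => forall z, Z z -> disjoint k z.

Lemma band_dcomp Z : is_band (dcomp Z).
Proof.
  unfold is_band, dcomp. split; [|split; [|split; [|split]]].
  - intros. apply disj_0.
  - intros. apply disj_add; auto.
  - intros. apply disj_scal; auto.
  - intros x y Hx Hle z Hz. apply (disj_dom y x); auto.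
  - intros A s HA [Hub Hl] z Hz.
    destruct (classic (exists a, A a)) as [[a0 Ha0]|Hne].
    +
      set (m := vabs z).
      assert (Hm : vle vzero m) by apply abs_ge0.
      assert (Hp : vmeet (pos s) m = vzero).
      { set (q := vsub (vjoin (pos s) m) m).
        assert (Hq : forall a, A a -> vle a q).
        { intros a Ha. apply le_trans with (pos a). apply le_pos.
          assert (Hd : vmeet (pos a) m = vzero).
          { apply (proj1 (disj_ge0_iff _ _ (pos_ge0 _) Hm)).
            apply (disj_dom _ a). rewrite abs_id by apply pos_ge0. apply pos_le.
            apply le_abs. apply abs_ge0. unfold m. apply disj_sym, disj_abs, disj_sym. auto. }
          pose proof (join_meet_add (pos a) m) as E. rewrite Hd, add0r in E.
          unfold q. apply (le_add2r_inv _ _ m). unfold vsub. rewrite addNKr. rewrite <- E.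
          apply join_mono; [apply pos_mono | apply le_refl]. apply Hub, Ha. }
        assert (Hsq : vle s q) by (apply Hl; auto).
        assert (Hq0 : vle vzero q).
        { unfold q. apply subr_ge0'. apply join_r. }
        assert (Hpq : vle (pos s) q) by (apply join_least; auto).
        apply le_antisym; [|apply meet_ge0; auto using pos_ge0].
        pose proof (join_meet_add (pos s) m) as E.
        unfold q in Hpq. apply (le_add2r _ _ m) in Hpq. unfold vsub in Hpq.
        rewrite addNKr, <- E in Hpq.
        apply (le_add2l_inv _ _ (vjoin (pos s) m)). rewrite add0r. exact Hpq. }
      assert (Hn : disjoint (neg s) z).
      { apply (disj_dom _ a0); [|apply HA; auto].
        rewrite abs_id by apply neg_ge0. apply le_trans with (neg a0).
        apply neg_anti, Hub, Ha0. apply join_least. apply le_abs_opp. apply abs_ge0. }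
      apply (disj_dom s (vadd (pos s) (neg s))).
      rewrite (abs_id (vadd _ _)). apply abs_pos_neg.
      rewrite <- (add0l vzero). apply le_add. apply pos_ge0. apply neg_ge0.
      apply disj_add; auto. unfold disjoint. rewrite (abs_id (pos s)) by apply pos_ge0. exact Hp.
    + (* empty set: s is below everything *)
      assert (Hz0 : vabs z = vzero).
      { apply le_antisym; [|apply abs_ge0].
        assert (H : vle s (vsub s (vabs z))).
        { apply Hl. intros a Ha. exfalso. apply Hne. exists a; auto. }
        apply (le_add2r _ _ (vabs z)) in H. unfold vsub in H. rewrite addNKr in H.
        apply (le_add2l_inv _ _ s). rewrite add0r. exact H. }
      unfold disjoint. rewrite Hz0. apply le_antisym. apply meet_r. apply meet_ge0. apply abs_ge0. apply le_refl.
Qed.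

Lemma band_inter (B1 B2 : V -> Prop) : is_band B1 -> is_band B2 -> is_band (fun k => B1 k /\ B2 k).
Proof.
  unfold is_band. intros (a1 & b1 & c1 & d1 & e1) (a2 & b2 & c2 & d2 & e2).
  split; [|split; [|split; [|split]]]; intros.
  - auto.
  - destruct H, H0; split; auto.
  - destruct H; split; auto.
  - destruct H; split; eauto.
  - split; [eapply e1 | eapply e2]; try exact H0; intros x Hx; apply H, Hx.
Qed.

Lemma band_0 B : is_band B -> B vzero. Proof. intros [h _]; exact h. Qed.
Lemma band_add B x y : is_band B -> B x -> B y -> B (vadd x y).
Proof. intros (_ & h & _); auto. Qed.
Lemma band_scal B (a : R) x : is_band B -> B x -> B (vscal a x).
Proof. intros (_ & _ & h & _); auto. Qed.
Lemma band_ideal B x y : is_band B -> B x -> vle (vabs y) (vabs x) -> B y.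
Proof. intros (_ & _ & _ & h & _); eauto. Qed.
Lemma band_opp B x : is_band B -> B x -> B (vopp x).
Proof. intros. apply (band_ideal B x); auto. rewrite abs_opp. apply le_refl. Qed.
Lemma band_sub B x y : is_band B -> B x -> B y -> B (vsub x y).
Proof. intros. unfold vsub. apply band_add; auto. apply band_opp; auto. Qed.
Lemma band_abs B x : is_band B -> B x -> B (vabs x).
Proof. intros. apply (band_ideal B x); auto. rewrite abs_abs. apply le_refl. Qed.

Lemma decomp_ge0 b c : vle vzero (vadd b c) ->
  (forall k, vle (vabs k) (vabs b) -> disjoint k c) -> vle vzero b.
Proof.
  intros H Hd.
  assert (H1 : vle (vopp b) c).
  { apply (le_add2l_inv _ _ b). rewrite addNr. exact H. }
  assert (H2 : vle (neg b) (vabs c)).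
  { apply le_trans with (pos c). apply join_mono; auto using le_refl.
    apply pos_le. apply le_abs. apply abs_ge0. }
  assert (H3 : disjoint (neg b) c).
  { apply Hd. rewrite abs_id by apply neg_ge0. apply join_least. apply le_abs_opp. apply abs_ge0. }
  unfold disjoint in H3. rewrite abs_id in H3 by apply neg_ge0.
  rewrite meet_idl in H3 by exact H2.
  rewrite <- (pos_sub_neg b), H3, subr0. apply pos_ge0.
Qed.

Section Proj.
Variable B : V -> Prop.
Hypothesis HB : is_band B.
Variable rho : V -> V.
Hypothesis Hrho : forall x, B (rho x) /\ disj_compl B (vsub x (rho x)).

Lemma dc_band : is_band (disj_compl B). Proof using HB Hrho. apply band_dcomp. Qed.

Lemma bp_uniq f b : B b -> disj_compl B (vsub f b) -> rho f = b.
Proof using HB Hrho.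
  intros Hb Hc. apply sub_eq0. apply disj_self.
  destruct (Hrho f) as [H1 H2].
  assert (E : vsub (rho f) b = vsub (vsub f b) (vsub f (rho f))).
  { unfold vsub. rewrite oppD, oppK. rewrite add4, addNr, add0l. apply addC. }
  pose proof (band_sub _ _ _ HB H1 Hb) as I1.
  assert (I2 : disj_compl B (vsub (rho f) b)).
  { rewrite E. apply band_sub; auto. apply dc_band. }
  apply I2, I1.
Qed.
Lemma bp_in b : B b -> rho b = b.
Proof using HB Hrho. intro. apply bp_uniq; auto. rewrite subrr. apply band_0, dc_band. Qed.
Lemma bp_out c : disj_compl B c -> rho c = vzero.
Proof using HB Hrho. intro. apply bp_uniq. apply band_0; auto. rewrite subr0. auto. Qed.
Lemma bp_add x y : rho (vadd x y) = vadd (rho x) (rho y).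
Proof using HB Hrho.
  destruct (Hrho x) as [a1 b1], (Hrho y) as [a2 b2].
  apply bp_uniq. apply band_add; auto. rewrite sub_add2. apply band_add; auto. apply dc_band.
Qed.
Lemma bp_opp x : rho (vopp x) = vopp (rho x).
Proof using HB Hrho.
  destruct (Hrho x) as [a1 b1].
  apply bp_uniq. apply band_opp; auto.
  assert (E : vsub (vopp x) (vopp (rho x)) = vopp (vsub x (rho x))) by (unfold vsub; rewrite oppD; reflexivity).
  rewrite E. apply band_opp. apply dc_band. exact b1.
Qed.
Lemma bp_sub x y : rho (vsub x y) = vsub (rho x) (rho y).
Proof using HB Hrho. unfold vsub. rewrite bp_add, bp_opp. reflexivity. Qed.
Lemma bp_scal (a : R) x : rho (vscal a x) = vscal a (rho x).
Proof using HB Hrho.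
  destruct (Hrho x) as [a1 b1].
  apply bp_uniq. apply band_scal; auto. rewrite <- scalB. apply band_scal. apply dc_band. exact b1.
Qed.
Lemma bp_ge0 x : vle vzero x -> vle vzero (rho x).
Proof using HB Hrho.
  intro H. destruct (Hrho x) as [a1 b1].
  apply (decomp_ge0 _ (vsub x (rho x))). rewrite subK. exact H.
  intros k Hk. apply disj_sym. apply b1. eapply band_ideal; eauto.
Qed.
Lemma bp_le_id x : vle vzero x -> vle (rho x) x.
Proof using HB Hrho.
  intro H. destruct (Hrho x) as [a1 b1]. apply subr_ge0.
  apply (decomp_ge0 _ (rho x)). rewrite addC, subK. exact H.
  intros k Hk. assert (Hk' : disj_compl B k) by (eapply band_ideal; eauto; apply dc_band).
  apply Hk', a1.
Qed.
Lemma bp_mono x y : vle x y -> vle (rho x) (rho y).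
Proof using HB Hrho.
  intro H. apply subr_ge0. rewrite <- bp_sub. apply bp_ge0. apply subr_ge0', H.
Qed.
Lemma bp_0 : rho vzero = vzero.
Proof using HB Hrho. apply bp_in. apply band_0; auto. Qed.

End Proj.

End Bands.

Definition is_inf {E : VectorLattice} (A : E -> Prop) (s : E) : Prop :=
  (forall x, A x -> vle s x) /\ (forall l, (forall x, A x -> vle l x) -> vle l s).

Section Dedekind.
Context {F : VectorLattice}.
Hypothesis HF : dedekind_complete F.
Implicit Types x y z w u v a b c d f k : F.

Lemma inf_exists (A : F -> Prop) : (exists a, A a) -> (exists l, forall a, A a -> vle l a) ->
  exists s, is_inf A s.
Proof.
  intros [a Ha] [l Hl].
  destruct (HF (fun f => A (vopp f))) as [s [Hs1 Hs2]].
  - exists (vopp a). rewrite oppK. auto.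
  - exists (vopp l). intros x Hx. rewrite <- (oppK x). apply le_opp. auto.
  - exists (vopp s). split.
    + intros x Hx. rewrite <- (oppK x). apply le_opp. apply Hs1. rewrite oppK. auto.
    + intros l' Hl'. rewrite <- (oppK l'). apply le_opp. apply Hs2.
      intros x Hx. rewrite <- (oppK x). apply le_opp. auto.
Qed.

Lemma archimedean w z : vle vzero w -> (forall eps, 0 < eps -> vle z (vscal eps w)) -> vle z vzero.
Proof.
  intros Hw H.
  assert (Hp : forall eps, 0 < eps -> vle (pos z) (vscal eps w)).
  { intros eps He. apply pos_le. auto. apply scal_ge0; auto. lra. }
  destruct (HF (fun f => exists t, 0 < t /\ f = vscal t (pos z))) as [s [Hs1 Hs2]].
  - exists (vscal 1 (pos z)). exists 1. split; auto. lra.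
  - exists w. intros f [t [Ht ->]]. apply (le_scal_inv (/t)).
    apply Rinv_0_lt_compat; auto. rewrite vscalA, Rinv_l, vscal1 by lra. apply Hp.
    apply Rinv_0_lt_compat; auto.
  - assert (H1 : vle s (vscal (/2) s)).
    { apply Hs2. intros f [t [Ht ->]]. apply (le_scal_inv 2). lra.
      rewrite !vscalA. replace (2 * /2) with 1 by field. rewrite vscal1.
      apply Hs1. exists (2 * t). split; auto. lra. }
    assert (H2 : vle (pos z) s) by (apply Hs1; exists 1; split; [lra | rewrite vscal1; auto]).
    assert (H3 : vle s vzero).
    { apply (le_scal 2) in H1; [|lra]. rewrite vscalA in H1.
      replace (2 * /2) with 1 in H1 by field. rewrite vscal1, scal2 in H1.
      apply (le_add2l_inv _ _ s). rewrite add0r. exact H1. }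
    apply le_trans with (pos z). apply le_pos. apply le_trans with s; auto.
Qed.

Lemma proj_exists_pos (B : F -> Prop) : is_band B -> forall f, vle vzero f ->
  exists b, B b /\ disj_compl B (vsub f b).
Proof.
  intros HB f Hf.
  destruct (HF (fun y => B y /\ vle vzero y /\ vle y f)) as [b [Hb1 Hb2]].
  - exists vzero. split. apply band_0; auto. split; auto using le_refl.
  - exists f. intros x (_ & _ & h). exact h.
  - assert (HbB : B b).
    { destruct HB as (_ & _ & _ & _ & h). apply (h (fun y => B y /\ vle vzero y /\ vle y f) b); [|split; auto]. intros x [hx _]; exact hx. }
    assert (Hb0 : vle vzero b) by (apply le_trans with vzero; [apply le_refl|]; apply Hb1; split; [apply band_0; auto|split; auto using le_refl]).
    assert (Hbf : vle b f) by (apply Hb2; intros x (_ & _ & h); exact h).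
    exists b. split; auto.
    intros c Hc. set (d := vsub f b).
    assert (Hd : vle vzero d) by (apply subr_ge0', Hbf).
    set (t := vmeet d (vabs c)).
    assert (Ht0 : vle vzero t) by (apply meet_ge0; auto; apply abs_ge0).
    assert (HtB : B t).
    { apply (band_ideal B (vabs c)); auto. apply band_abs; auto.
      rewrite abs_abs, abs_id by auto. apply meet_r. }
    assert (H1 : vle (vadd b t) b).
    { apply Hb1. split. apply band_add; auto. split.
      rewrite <- (add0l vzero). apply le_add; auto.
      apply le_trans with (vadd b d). apply le_add2l, meet_l. unfold d. rewrite subK. apply le_refl. }
    assert (Ht : t = vzero).
    { apply le_antisym; auto. apply (le_add2l_inv _ _ b). rewrite add0r. exact H1. }
    unfold disjoint. rewrite (abs_id d) by auto. exact Ht.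
Qed.

Lemma proj_exists (B : F -> Prop) : is_band B -> forall f,
  exists b, B b /\ disj_compl B (vsub f b).
Proof.
  intros HB f.
  destruct (proj_exists_pos B HB (pos f) (pos_ge0 _)) as [b1 [H1 H1']].
  destruct (proj_exists_pos B HB (neg f) (neg_ge0 _)) as [b2 [H2 H2']].
  exists (vsub b1 b2). split. apply band_sub; auto.
  rewrite <- (pos_sub_neg f) at 1.
  assert (E2 : vsub (vsub (pos f) (neg f)) (vsub b1 b2) = vsub (vsub (pos f) b1) (vsub (neg f) b2)).
  { unfold vsub. rewrite !oppD, !oppK. rewrite add4. reflexivity. }
  rewrite E2. apply band_sub; auto; apply band_dcomp.
Qed.

End Dedekind.

Definition proj {F : VectorLattice} (B : F -> Prop) (f : F) : F :=
  epsilon (inhabits vzero) (fun b => B b /\ disj_compl B (vsub f b)).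

Lemma proj_spec {F : VectorLattice} (HF : dedekind_complete F) (B : F -> Prop) :
  is_band B -> forall f, B (proj B f) /\ disj_compl B (vsub f (proj B f)).
Proof. intros HB f. unfold proj. apply epsilon_spec. apply proj_exists; auto. Qed.

Section Main.
Context {E F : VectorLattice}.
Hypothesis HF : dedekind_complete F.
Variables S T : E -> F.
Hypothesis HS : in_U_plus S.
Hypothesis HT : in_U_plus T.

Lemma op_ge0 (Q : E -> F) : in_U_plus Q -> forall z, vle vzero (Q z).
Proof. intros [_ H] z. specialize (H z). unfold U_zero in H. rewrite subr0 in H. exact H. Qed.
Lemma op_0 (Q : E -> F) : orth_additive Q -> Q vzero = vzero.
Proof.
  intro H. pose proof (H vzero vzero (disj_0 vzero)) as H0. rewrite add0l in H0.
  symmetry. apply (add_cancel_r _ _ (Q vzero)). rewrite add0l. exact H0.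
Qed.

Lemma S0 : S vzero = vzero. Proof. apply op_0. apply HS. Qed.
Lemma T0 : T vzero = vzero. Proof. apply op_0. apply HT. Qed.
Lemma Sge0 z : vle vzero (S z). Proof. apply op_ge0, HS. Qed.
Lemma Tge0 z : vle vzero (T z). Proof. apply op_ge0, HT. Qed.
Lemma Sadd : orth_additive S. Proof. apply HS. Qed.
Lemma Tadd : orth_additive T. Proof. apply HT. Qed.

Definition g (z y : E) : F := vadd (S (vsub z y)) (T y).
Definition Az (z : E) : F -> Prop := fun f => exists y, fragment y z /\ f = g z y.
Definition Rf (z : E) : F := epsilon (inhabits vzero) (is_inf (Az z)).

Lemma g_ge0 z y : vle vzero (g z y).
Proof. unfold g. rewrite <- (add0l vzero). apply le_add. apply Sge0. apply Tge0. Qed.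

Lemma Rf_spec z : is_inf (Az z) (Rf z).
Proof.
  unfold Rf. apply epsilon_spec. apply inf_exists; auto.
  - exists (g z vzero). exists vzero. split; auto. apply frag_0.
  - exists vzero. intros a [y [_ ->]]. apply g_ge0.
Qed.

Lemma Rf_ge0 z : vle vzero (Rf z).
Proof. apply (proj2 (Rf_spec z)). intros a [y [_ ->]]. apply g_ge0. Qed.
Lemma Rf_le_g z y : fragment y z -> vle (Rf z) (g z y).
Proof. intro. apply (proj1 (Rf_spec z)). exists y. auto. Qed.
Lemma Rf_leS z : vle (Rf z) (S z).
Proof.
  pose proof (Rf_le_g z vzero (frag_0 z)) as H. unfold g in H. rewrite subr0, T0, add0r in H. exact H.
Qed.
Lemma Rf_leT z : vle (Rf z) (T z).
Proof.
  pose proof (Rf_le_g z z (frag_self z)) as H. unfold g in H. rewrite subrr, S0, add0l in H. exact H.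
Qed.

Lemma g_split z1 z2 y1 y2 : disjoint z1 z2 -> fragment y1 z1 -> fragment y2 z2 ->
  g (vadd z1 z2) (vadd y1 y2) = vadd (g z1 y1) (g z2 y2).
Proof.
  intros H F1 F2. destruct (frag_sum _ _ _ _ H F1 F2) as (_ & D12 & Dc).
  unfold g. rewrite sub_add2, Sadd, Tadd by auto. apply add4.
Qed.

Lemma le_sub_add (a b c : F) : vle (vsub a b) c -> vle a (vadd c b).
Proof. intro H. apply (le_add2r _ _ b) in H. unfold vsub in H. rewrite addNKr in H. exact H. Qed.
Lemma le_add_sub (a b c : F) : vle a (vadd c b) -> vle (vsub a b) c.
Proof. intro H. apply (le_add2r _ _ (vopp b)) in H. rewrite addKr in H. exact H. Qed.

Lemma Rf_add z1 z2 : disjoint z1 z2 -> Rf (vadd z1 z2) = vadd (Rf z1) (Rf z2).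
Proof.
  intro H. apply le_antisym.
  - set (l := Rf (vadd z1 z2)).
    assert (H1 : forall y2, fragment y2 z2 -> vle (vsub l (g z2 y2)) (Rf z1)).
    { intros y2 F2. apply (proj2 (Rf_spec z1)). intros a [y1 [F1 ->]].
      apply le_add_sub. rewrite <- g_split by auto. apply Rf_le_g.
      apply (frag_sum _ _ _ _ H F1 F2). }
    assert (H2 : vle (vsub l (Rf z1)) (Rf z2)).
    { apply (proj2 (Rf_spec z2)). intros a [y2 [F2 ->]].
      apply le_add_sub. rewrite addC. apply le_sub_add. apply H1, F2. }
    apply le_sub_add in H2. rewrite addC. exact H2.
  - apply (proj2 (Rf_spec _)). intros a [y [Fy ->]].
    destruct (frag_split _ _ _ H Fy) as (y1 & y2 & F1 & F2 & ->).
    rewrite g_split by auto. apply le_add; apply Rf_le_g; auto.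
Qed.

Lemma Rf_U : in_U Rf.
Proof.
  split.
  - intros z1 z2 H. apply Rf_add, H.
  - intros a b. destruct HS as [[_ Hb] _]. destruct (Hb a b) as [c [d Hcd]].
    exists vzero, d. intros z H1 H2. split. apply Rf_ge0.
    apply le_trans with (S z). apply Rf_leS. apply (Hcd z H1 H2).
Qed.

Lemma key_zero (Hinf : U_inf_is S T U_zero) x h :
  (forall y, fragment y x -> vle h (g x y)) -> vle h vzero.
Proof.
  intro Hh. destruct Hinf as (_ & _ & _ & Hgr).
  assert (HR : U_le Rf U_zero).
  { apply Hgr. apply Rf_U. intro z. apply subr_ge0', Rf_leS. intro z. apply subr_ge0', Rf_leT. }
  specialize (HR x). unfold U_zero in HR. apply subr_ge0 in HR.
  apply le_trans with (Rf x). apply (proj2 (Rf_spec x)). intros a [y [Fy ->]]. auto.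
  exact HR.
Qed.


Section Forward.
Hypothesis Hinf : U_inf_is S T U_zero.
Variable x : E.
Variable eps : R.
Hypothesis Heps : 0 < eps.

Definition u := T x.
Definition v := S x.
Definition m := vmeet u v.

Definition Good (B : F -> Prop) : Prop :=
  is_band B /\ (exists f, B f /\ f <> vzero) /\
  exists y, fragment y x /\ vle (proj B (T y)) (vscal eps u) /\ vle (proj B (S (vsub x y))) (vscal eps v).

Lemma u_ge0 : vle vzero u. Proof. apply Tge0. Qed.
Lemma v_ge0 : vle vzero v. Proof. apply Sge0. Qed.

Lemma density (C : F -> Prop) : is_band C -> (exists f, C f /\ f <> vzero) ->
  exists B, Good B /\ forall h, B h -> C h.
Proof.
  intros HC [f [Cf fnz]].
  set (f' := vabs f).
  assert (Cf' : C f') by (apply band_abs; auto).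
  assert (f'nz : f' <> vzero) by (intro Hc; apply fnz, abs_eq0, Hc).
  assert (f'0 : vle vzero f') by apply abs_ge0.
  pose proof u_ge0 as Hu. pose proof v_ge0 as Hv.
  destruct (classic (vmeet f' u = vzero)) as [H1|H1].
  { set (B := fun h => C h /\ dcomp (fun q => q = u) h).
    assert (HB : is_band B) by (apply band_inter; auto; apply band_dcomp).
    pose proof (proj_spec HF B HB) as Hs.
    exists B. split; [|intros h [Ch _]; auto].
    split; auto. split.
    - exists f'. split; auto. split; auto. intros q ->. unfold disjoint.
      rewrite (abs_id f'), (abs_id u); auto.
    - exists x. split. apply frag_self. split.
      + rewrite (bp_out B HB _ Hs). apply scal_ge0; auto. lra.
        intros b [_ Hb]. apply disj_sym, Hb. reflexivity.
      + rewrite subrr, S0, (bp_0 B HB _ Hs). apply scal_ge0; auto. lra. }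
  set (g' := vmeet f' u).
  assert (g'0 : vle vzero g') by (apply meet_ge0; auto).
  assert (Cg' : C g').
  { apply (band_ideal C f'); auto. rewrite (abs_id g'), (abs_id f'); auto. apply meet_l. }
  destruct (classic (vmeet g' v = vzero)) as [H2|H2].
  { set (B := fun h => C h /\ dcomp (fun q => q = v) h).
    assert (HB : is_band B) by (apply band_inter; auto; apply band_dcomp).
    pose proof (proj_spec HF B HB) as Hs.
    exists B. split; [|intros h [Ch _]; auto].
    split; auto. split.
    - exists g'. split; auto. split; auto. intros q ->. unfold disjoint.
      rewrite (abs_id g'), (abs_id v); auto.
    - exists vzero. split. apply frag_0. split.
      + rewrite T0, (bp_0 B HB _ Hs). apply scal_ge0; auto. lra.
      + rewrite subr0. rewrite (bp_out B HB _ Hs). apply scal_ge0; auto. lra.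
        intros b [_ Hb]. apply disj_sym, Hb. reflexivity. }
  set (h := vmeet g' v).
  assert (h0 : vle vzero h) by (apply meet_ge0; auto).
  assert (Ch : C h).
  { apply (band_ideal C g'); auto. rewrite (abs_id g'), (abs_id h); auto. apply meet_l. }
  assert (hm : vle h m).
  { unfold h, m. apply meet_mono; [apply meet_r | apply le_refl]. }
  set (e := fun y => pos (vsub (g x y) (vscal eps m))).
  destruct (classic (exists y, fragment y x /\ exists f0, (C f0 /\ dcomp (fun q => q = e y) f0) /\ f0 <> vzero))
    as [[y [Fy [f0 [Hf0 nz0]]]] | Hno].
  - set (B := fun k => C k /\ dcomp (fun q => q = e y) k).
    assert (HB : is_band B) by (apply band_inter; auto; apply band_dcomp).
    pose proof (proj_spec HF B HB) as Hs.
    exists B. split; [|intros k [Ck _]; auto].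
    split; auto. split. exists f0. split; auto.
    exists y. split; auto.
    set (zz := vsub (g x y) (vscal eps m)).
    assert (Hpz : proj B (pos zz) = vzero).
    { apply (bp_out B HB _ Hs). intros b [_ Hb]. apply disj_sym, Hb. reflexivity. }
    assert (Hz : vle (proj B zz) vzero).
    { rewrite <- (pos_sub_neg zz) at 1. rewrite (bp_sub B HB _ Hs), Hpz, sub0r.
      apply le_opp0. apply (bp_ge0 B HB _ Hs). apply neg_ge0. }
    unfold zz in Hz. rewrite (bp_sub B HB _ Hs), (bp_scal B HB _ Hs) in Hz.
    apply subr_le0 in Hz.
    assert (Hm : vle (vscal eps (proj B m)) (vscal eps m)).
    { apply le_scal. lra. apply (bp_le_id B HB _ Hs). apply meet_ge0; auto. }
    assert (Hg : vle (proj B (g x y)) (vscal eps m)) by (eapply le_trans; eauto).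
    unfold g in Hg. rewrite (bp_add B HB _ Hs) in Hg.
    pose proof (bp_ge0 B HB _ Hs _ (Sge0 (vsub x y))) as PS.
    pose proof (bp_ge0 B HB _ Hs _ (Tge0 y)) as PT.
    split.
    + apply le_trans with (vscal eps m). apply le_trans with (vadd (proj B (S (vsub x y))) (proj B (T y))); auto.
      apply le_addl; auto. apply le_scal. lra. apply meet_l.
    + apply le_trans with (vscal eps m). apply le_trans with (vadd (proj B (S (vsub x y))) (proj B (T y))); auto.
      apply le_addr; auto. apply le_scal. lra. apply meet_r.
  - exfalso.
    assert (Hk : forall y, fragment y x -> vle (vscal eps h) (g x y)).
    { intros y Fy. set (k := pos (vsub (vscal eps h) (g x y))).
      assert (Heh : vle vzero (vscal eps h)) by (apply scal_ge0; auto; lra).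
      assert (Ck : C k).
      { apply (band_ideal C (vscal eps h)). auto. apply band_scal; auto.
        rewrite (abs_id k) by apply pos_ge0. rewrite (abs_id (vscal eps h)) by auto.
        apply pos_le; auto. apply le_add_sub. apply le_addr. apply g_ge0. }
      assert (Dk : dcomp (fun q => q = e y) k).
      { intros q ->. set (zz := vsub (g x y) (vscal eps m)).
        assert (Hkn : vle k (neg zz)).
        { unfold k, neg. apply pos_mono. unfold zz. rewrite oppB.
          unfold vsub. rewrite (addC (vscal eps m)), (addC (vscal eps h)).
          apply le_add2l. apply le_scal; auto. lra. }
        apply (disj_dom k (neg zz)).
        { rewrite (abs_id k) by apply pos_ge0. rewrite (abs_id (neg zz)) by apply neg_ge0. exact Hkn. }
        unfold disjoint. rewrite (abs_id (neg zz)) by apply neg_ge0. rewrite (abs_id (e y)) by apply pos_ge0.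
        unfold e. fold zz. rewrite meetC. apply pos_neg_meet. }
      assert (k0 : k = vzero).
      { apply NNPP. intro nk. apply Hno. exists y. split; auto. exists k. auto. }
      apply subr_le0. rewrite <- k0. apply le_pos. }
    pose proof (key_zero Hinf x _ Hk) as H0.
    apply H2. fold h. apply le_antisym; auto.
    apply (le_scal_inv eps). auto. rewrite scalr0. exact H0.
Qed.

Definition Fam (A : (F -> Prop) -> Prop) : Prop :=
  (forall B, A B -> Good B) /\
  (forall B1 B2, A B1 -> A B2 -> B1 <> B2 -> forall b1 b2, B1 b1 -> B2 b2 -> disjoint b1 b2).

Lemma forward_exists : exists (D : Type) (rho : D -> F -> F) (xs : D -> E),
       partition_of_unity rho /\
       (forall a, fragment (xs a) x) /\
       (forall a, vle (rho a (T (xs a))) (vscal eps (T x)) /\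
                  vle (rho a (S (vsub x (xs a)))) (vscal eps (S x))).
Proof.
  destruct (ZW.my_zorn (F -> Prop) Fam) as [A [[HAg HAd] Amax]].
  { intros Fm HFm Hch. split.
    - intros B [X [FX XB]]. apply (HFm X FX), XB.
    - intros B1 B2 [X1 [F1 X1B]] [X2 [F2 X2B]] ne. destruct (Hch X1 X2 F1 F2) as [h|h].
      + apply (proj2 (HFm X2 F2)); auto.
      + apply (proj2 (HFm X1 F1)); auto. }
  assert (Hxs : forall d : {B | A B}, exists y, fragment y x /\
     vle (proj (proj1_sig d) (T y)) (vscal eps u) /\ vle (proj (proj1_sig d) (S (vsub x y))) (vscal eps v)).
  { intros [B AB]. simpl. apply (HAg B AB). }
  destruct (choice _ Hxs) as [xs Hxs'].
  exists {B | A B}, (fun d => proj (proj1_sig d)), xs.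
  split; [|split; intro d; apply Hxs'].
  split; [|split].
  - intros [B AB]. exists B. simpl. split. apply (HAg B AB). apply proj_spec; auto. apply (HAg B AB).
  - intros [B1 p1] [B2 p2] ne f. simpl.
    assert (ne' : B1 <> B2) by (intro; subst; apply ne; f_equal; apply proof_irrelevance).
    assert (HB1 : is_band B1) by apply (HAg B1 p1).
    assert (HB2 : is_band B2) by apply (HAg B2 p2).
    apply (bp_out B1 HB1 _ (proj_spec HF B1 HB1)). intros b Hb.
    apply (HAd B2 B1 p2 p1); auto. apply (proj_spec HF B2 HB2).
  - intros pi [Bp [HBp Hpi]] Hle f.
    set (k := vsub f (pi f)).
    assert (kz : k = vzero).
    { apply NNPP. intro knz.
      set (C := dcomp (fun b => exists B, A B /\ B b)).
      assert (kC : C k).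
      { intros b [B [AB Bb]].
        assert (HB : is_band B) by apply (HAg B AB).
        apply (proj2 (Hpi f)).
        rewrite <- (bp_in B HB _ (proj_spec HF B HB) b Bb).
        pose proof (Hle (exist _ B AB) b) as Eq1. simpl in Eq1. rewrite <- Eq1. apply Hpi. }
      destruct (density C (band_dcomp _) (ex_intro _ k (conj kC knz))) as [B' [GB' B'C]].
      set (A' := fun B => A B \/ B = B').
      assert (HA' : Fam A').
      { split.
        - intros B [AB| ->]; auto.
        - intros B1 B2 [A1| ->] [A2| ->] ne b1 b2 H1 H2.
          + apply (HAd B1 B2); auto.
          + apply disj_sym. apply (B'C b2 H2). exists B1. auto.
          + apply (B'C b1 H1). exists B2. auto.
          + exfalso; apply ne; reflexivity. }
      pose proof (Amax A' (fun B h => or_introl h) HA' B' (or_intror eq_refl)) as AB'.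
      destruct GB' as [_ [[f1 [Bf1 nf1]] _]].
      apply nf1. apply disj_self. apply (B'C f1 Bf1). exists B'. auto. }
    symmetry. apply sub_eq0. exact kz.
Qed.

End Forward.

Lemma converse :
  (forall (x : E) (eps : R), 0 < eps ->
     exists (D : Type) (rho : D -> F -> F) (xs : D -> E),
       partition_of_unity rho /\
       (forall a, fragment (xs a) x) /\
       (forall a, vle (rho a (T (xs a))) (vscal eps (T x)) /\
                  vle (rho a (S (vsub x (xs a)))) (vscal eps (S x)))) ->
  U_inf_is S T U_zero.
Proof.
  intro Hc. split; [|split; [apply HS|split; [apply HT|]]].
  { split. intros a b _. unfold U_zero. rewrite add0l. reflexivity.
    intros a b. exists vzero, vzero. intros. unfold U_zero. split; apply le_refl. }
  intros Rr [HRa _] HRS HRT z. unfold U_zero. apply subr_ge0'.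
  set (w := vadd (T z) (S z)).
  assert (Hw : vle vzero w) by (unfold w; rewrite <- (add0l vzero); apply le_add; [apply Tge0|apply Sge0]).
  apply (archimedean HF w); auto.
  intros eps Heps.
  destruct (Hc z eps Heps) as (D & rho & xs & [Hbp [Hdj Hsup]] & Hfr & Hin).
  set (zz := vsub (Rr z) (vscal eps w)).
  set (k := pos zz).
  assert (kz : k = vzero).
  { set (Ck := dcomp (fun q => q = k)).
    assert (HCk : is_band Ck) by apply band_dcomp.
    pose proof (proj_spec HF Ck HCk) as Hs.
    assert (Hpik : proj Ck k = k).
    { apply Hsup. exists Ck. split; auto.
      intros a f.
      destruct (Hbp a) as [Ba [HBa Hra]].
      apply (bp_in Ck HCk _ Hs). intros q ->.
      assert (Hrz : vle (rho a zz) vzero).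
      { assert (E1 : Rr z = vadd (Rr (xs a)) (Rr (vsub z (xs a)))).
        { rewrite <- HRa. rewrite subK. reflexivity. apply Hfr. }
        assert (H1 : vle (Rr z) (vadd (T (xs a)) (S (vsub z (xs a))))).
        { rewrite E1. apply le_add. apply subr_ge0, HRT. apply subr_ge0, HRS. }
        apply (bp_mono Ba HBa _ Hra) in H1. rewrite (bp_add Ba HBa _ Hra) in H1.
        assert (H2 : vle (rho a (Rr z)) (vscal eps w)).
        { eapply le_trans. exact H1. unfold w. rewrite vscalDr. apply le_add; apply Hin. }
        apply (bp_mono Ba HBa _ Hra) in H2.
        rewrite (bp_in Ba HBa _ Hra) in H2 by apply Hra.
        unfold zz. rewrite (bp_sub Ba HBa _ Hra), (bp_scal Ba HBa _ Hra).
        apply subr_le0'. rewrite <- (bp_scal Ba HBa _ Hra). exact H2. }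
      set (c := vsub zz (rho a zz)).
      assert (Hk : vle k (vabs c)).
      { unfold k. rewrite <- (subK zz (rho a zz)). fold c.
        eapply le_trans. apply pos_add. rewrite (pos_le0 _ Hrz), add0l.
        apply pos_le. apply le_abs. apply abs_ge0. }
      apply disj_sym. apply (disj_dom k c).
      rewrite (abs_id k) by apply pos_ge0. exact Hk.
      apply (proj2 (Hra zz)). apply Hra. }
    pose proof (proj1 (Hs k)) as Hk. rewrite Hpik in Hk.
    apply disj_self. apply Hk. reflexivity. }
  apply subr_le0. rewrite <- kz. apply le_pos.
Qed.

End Main.

Theorem theorem3p3 (E F : VectorLattice) (HF : dedekind_complete F)
  (S T : E -> F) (HS : in_U_plus S) (HT : in_U_plus T) :
  U_inf_is S T U_zero <->
  (forall (x : E) (eps : R), 0 < eps ->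
     exists (D : Type) (rho : D -> F -> F) (xs : D -> E),
       partition_of_unity rho /\
       (forall a, fragment (xs a) x) /\
       (forall a, vle (rho a (T (xs a))) (vscal eps (T x)) /\
                  vle (rho a (S (vsub x (xs a)))) (vscal eps (S x)))).
Proof.
  split.
  - intros Hinf x eps Heps. eapply forward_exists; eauto.
  - apply converse; auto.
Qed.
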